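(* Let $\mathbf R=\{R_i,t_i\}_{i\ge0}$ be a purely inseparable tower arising from a pair $(R,I_0)$ which satisfies conditions (d) and (f), with first perfectoid pillar $I_1$. Then $\mathbf R$ satisfies condition (g) if and only if, for every $i\ge0$, the following two commutative squares of sets are cartesian: $$\begin{array}{ccc}(R_i)_{I_0\text{-tor}}&\xrightarrow{\varphi_{I_0,R_i}}&R_i/I_0R_i\\ {\scriptstyle(t_i)_{\mathrm{tor}}}\downarrow&&\downarrow{\scriptstyle\overline{t_i}}\\ (R_{i+1})_{I_0\text{-tor}}&\xrightarrow{\varphi_{I_0,R_{i+1}}}&R_{i+1}/I_0R_{i+1}\end{array}\qquad \begin{array}{ccc}(R_{i+1})_{I_0\text{-tor}}&\xrightarrow{\varphi_{I_1,R_{i+1}}}&R_{i+1}/I_1R_{i+1}\\ {\scriptstyle x\mapsto x^p}\downarrow&&\downarrow{\scriptstyle\varphi'}\\ (R_{i+1})_{I_0\text{-tor}}&\xrightarrow{\varphi_{I_0,R_{i+1}}}&R_{i+1}/I_0R_{i+1}\end{array}$$ where $(t_i)_{\mathrm{tor}}$ is the restriction of $t_i$, $\varphi_{I_1,R_{i+1}}$ is the inclusion $(R_{i+1})_{I_0\text{-tor}}\subset R_{i+1}$ followed by the projection to $R_{i+1}/I_1R_{i+1}$, and $\varphi'$ is the map $x\bmod I_1R_{i+1}\mapsto x^p\bmod I_0R_{i+1}$.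
   Context: Fix a prime $p$; rings are commutative with $1$. For a ring $A$, an ideal $I$ and an $A$-module $M$, $M_{I\text{-tor}}$ is the submodule of $x\in M$ such that for every $a\in I$ some $a^nx=0$; $\varphi_{I,A}\colon A_{I\text{-tor}}\to A/IA$ is inclusion followed by projection. $\varphi$ is absolute Frobenius. A tower of rings $\mathbf R=\{R_i,t_i\}_{i\ge0}$ is a sequence of ring maps $R_0\xrightarrow{t_0}R_1\to\cdots$. For a ring $R$ and ideal $I_0$, write $\overline{R_i}=R_i/I_0R_i$, $\overline{t_i}$ the induced maps. A purely inseparable tower arising from $(R,I_0)$: (a) $R_0=R$, $p\in I_0$; (b) each $\overline{t_i}$ injective; (c) $\varphi(\overline{R_{i+1}})\subset\overline{t_i}(\overline{R_i})$; then $F_i\colon\overline{R_{i+1}}\to\overline{R_i}$ is the unique ring map with $\overline{t_i}\circ F_i=\varphi$. Conditions: (d) each $F_i$ is surjective; (f) $I_0$ is principal and there is a principal ideal $I_1\subset R_1$ (the first perfectoid pillar) with $I_1^p=I_0R_1$ and $\ker F_i=I_1\overline{R_{i+1}}$ for all $i\ge0$; (g) for all $i$, $I_0(R_i)_{I_0\text{-tor}}=0$ and there is a bijection $(F_i)_{\mathrm{tor}}\colon(R_{i+1})_{I_0\text{-tor}}\to(R_i)_{I_0\text{-tor}}$ with $\varphi_{I_0,R_i}\circ(F_i)_{\mathrm{tor}}=F_i\circ\varphi_{I_0,R_{i+1}}$. *)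

(* Defs.v *)
From HB Require Import structures.
From mathcomp Require Import all_boot all_algebra.
Set Implicit Arguments. Unset Strict Implicit. Unset Printing Implicit Defensive.
Import GRing.Theory.
Local Open Scope ring_scope.

(* Ideals are Prop-valued predicates; quotients R/J are represented by
   representatives together with the congruence  x == y mod J  :=  J (x - y). *)

Definition pid (R : comPzRingType) (a : R) : R -> Prop := fun x => exists c, x = c * a.

Definition cong (R : comPzRingType) (J : R -> Prop) (x y : R) : Prop := J (x - y).

Definition tor (R : comPzRingType) (I : R -> Prop) (x : R) : Prop :=
  forall a, I a -> exists n : nat, a ^+ n * x = 0.

Fixpoint tr (R : nat -> comPzRingType) (t : forall i, {rmorphism R i -> R i.+1})
  (i : nat) : R 0 -> R i :=
  match i as n return R 0 -> R n with
  | O => fun x => x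
  | S j => fun x => t j (tr t j x)
  end.

Fixpoint tr1 (R : nat -> comPzRingType) (t : forall i, {rmorphism R i -> R i.+1})
  (i : nat) : R 1 -> R i.+1 :=
  match i as n return R 1 -> R n.+1 with
  | O => fun x => x
  | S j => fun x => t j.+1 (tr1 t j x)
  end.

Arguments tr {R} t i.
Arguments tr1 {R} t i.

(* I_0 R_i, where I_0 = w0 R_0 (I_0 principal, condition (f)) *)
Definition I0R (R : nat -> comPzRingType) (t : forall i, {rmorphism R i -> R i.+1})
  (w0 : R 0) (i : nat) : R i -> Prop := pid (tr t i w0).

Arguments I0R {R} t w0 i.

Definition I1R (R : nat -> comPzRingType) (t : forall i, {rmorphism R i -> R i.+1})
  (w1 : R 1) (i : nat) : R i.+1 -> Prop := pid (tr1 t i w1).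

Arguments I1R {R} t w1 i.

Definition pi_tower (p : nat) (R : nat -> comPzRingType)
  (t : forall i, {rmorphism R i -> R i.+1}) (w0 : R 0) : Prop :=
  [/\ pid w0 (p%:R),
      (forall i (x y : R i), cong (I0R t w0 i.+1) (t i x) (t i y) ->
                             cong (I0R t w0 i) x y)
    & (forall i (y : R i.+1), exists x : R i,
          cong (I0R t w0 i.+1) (t i x) (y ^+ p))].

(* F_i (y mod I_0) = x mod I_0  iff  t_i x == y^p mod I_0 R_{i+1}. *)
Definition Frel (p : nat) (R : nat -> comPzRingType)
  (t : forall i, {rmorphism R i -> R i.+1}) (w0 : R 0) (i : nat)
  (y : R i.+1) (x : R i) : Prop := cong (I0R t w0 i.+1) (t i x) (y ^+ p).

Arguments Frel p {R} t w0 i y x.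

Definition cond_d (p : nat) (R : nat -> comPzRingType)
  (t : forall i, {rmorphism R i -> R i.+1}) (w0 : R 0) : Prop :=
  forall i (x : R i), exists y : R i.+1, Frel p t w0 i y x.

(* Condition (f), with I_0 = (w0) and first perfectoid pillar I_1 = (w1):
   I_1^p = (w1^p) = I_0 R_1, and ker F_i = I_1 \bar{R_{i+1}}, i.e.
   F_i(y mod I_0) = 0  iff  y \in I_1 R_{i+1} + I_0 R_{i+1}. *)
Definition cond_f (p : nat) (R : nat -> comPzRingType)
  (t : forall i, {rmorphism R i -> R i.+1}) (w0 : R 0) (w1 : R 1) : Prop :=
  (forall x : R 1, pid (w1 ^+ p) x <-> I0R t w0 1 x) /\
  (forall i (y : R i.+1),
      (exists x : R i, Frel p t w0 i y x /\ I0R t w0 i x) <->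
      (exists u v : R i.+1, y = u * tr1 t i w1 + v * tr t i.+1 w0)).

Definition cond_g (p : nat) (R : nat -> comPzRingType)
  (t : forall i, {rmorphism R i -> R i.+1}) (w0 : R 0) : Prop :=
  forall i,
    (forall x : R i, tor (I0R t w0 i) x -> forall a, I0R t w0 i a -> a * x = 0) /\
    exists Ft : {y : R i.+1 | tor (I0R t w0 i.+1) y} ->
                {x : R i | tor (I0R t w0 i) x},
      bijective Ft /\ forall y, Frel p t w0 i (sval y) (sval (Ft y)).

(* A commutative square of sets
       A --f--> B
       g|       |h
       C --k--> D
   where A (resp. C) is the subset PA (resp. PC) of a type, and B, D are quotient
   sets represented by representatives modulo equivalences eqB, eqD (maps into
   them are given on representatives).  It is cartesian iff
   A -> C x_D B, a |-> (g a, f a) is bijective. *)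
Definition cartesian {A B C D : Type} (PA : A -> Prop) (PC : C -> Prop)
  (eqB : B -> B -> Prop) (eqD : D -> D -> Prop)
  (f : A -> B) (g : A -> C) (h : B -> D) (k : C -> D) : Prop :=
  forall (c : C) (b : B), PC c -> eqD (k c) (h b) ->
    exists! a : A, [/\ PA a, g a = c & eqB (f a) b].

Definition square1 (R : nat -> comPzRingType)
  (t : forall i, {rmorphism R i -> R i.+1}) (w0 : R 0) (i : nat) : Prop :=
  cartesian (tor (I0R t w0 i)) (tor (I0R t w0 i.+1))
    (cong (I0R t w0 i)) (cong (I0R t w0 i.+1))
    (fun x : R i => x) (fun x => t i x) (fun x => t i x) (fun y : R i.+1 => y).

Definition square2 (p : nat) (R : nat -> comPzRingType)
  (t : forall i, {rmorphism R i -> R i.+1}) (w0 : R 0) (w1 : R 1) (i : nat) : Prop :=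
  cartesian (tor (I0R t w0 i.+1)) (tor (I0R t w0 i.+1))
    (cong (I1R t w1 i)) (cong (I0R t w0 i.+1))
    (fun x : R i.+1 => x) (fun x => x ^+ p) (fun x => x ^+ p) (fun y : R i.+1 => y).

(* Main.v *)
Require Import Defs.
From HB Require Import structures.
From mathcomp Require Import all_boot all_algebra.
From mathcomp Require Import ring.
From Stdlib Require Import ProofIrrelevance IndefiniteDescription.

Set Implicit Arguments. Unset Strict Implicit. Unset Printing Implicit Defensive.
Import GRing.Theory.
Local Open Scope ring_scope.

Lemma binom_p (R : comPzRingType) (p : nat) (x y : R) : prime p ->
  exists z, (x + y) ^+ p = x ^+ p + y ^+ p + p%:R * (x * y * z).
Proof.
move=> pp; have := prime_gt1 pp; case: p pp => [|q] // pp q1.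
exists (\sum_(i < q) (x ^+ (q - i.+1) * y ^+ i) *+ ('C(q.+1, i.+1) %/ q.+1)).
rewrite exprDn big_ord_recl big_ord_recr /= subn0 bin0 expr0 mulr1 subnn binn expr0 mul1r.
rewrite /bump /= add1n !mulr1n (addrC (\sum_(i < q) _)) addrA; congr (_ + _).
rewrite !mulr_sumr; apply: eq_bigr => i _ /=.
have hi : (0 < i.+1 < q.+1)%N by rewrite /= ltnS ltn_ord.
rewrite /bump /= add1n.
rewrite -{1}(divnK (prime_dvd_bin pp hi)) mulrnA mulr_natl; congr (_ *+ _).
rewrite subSS -(subnSK (ltn_ord i)) exprS exprS mulrnAr; congr (_ *+ _).
by rewrite -!mulrA; congr (_ * _); rewrite mulrCA.
Qed.

Lemma sig_eq (A : Type) (P : A -> Prop) (x y : {a | P a}) : sval x = sval y -> x = y.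
Proof.
case: x y => [a pa] [b pb] /= eab; subst b.
by rewrite (proof_irrelevance _ pa pb).
Qed.

Lemma inj_surj_bij (A B : Type) (f : A -> B) :
  injective f -> (forall b, exists a, f a = b) -> bijective f.
Proof.
move=> fi fs.
pose g b := sval (constructive_indefinite_description _ (fs b)).
have fg : cancel g f.
  by move=> b; rewrite /g; case: (constructive_indefinite_description _ _).
by exists g => // a; apply: fi; rewrite fg.
Qed.

Section PidTor.
End PidTor.

Lemma pid0 (S : comPzRingType) (w : S) : pid w 0.
Proof. by exists 0; rewrite mul0r. Qed.
Lemma pidw (S : comPzRingType) (w : S) : pid w w.
Proof. by exists 1; rewrite mul1r. Qed.
Lemma pidD (S : comPzRingType) (w x y : S) : pid w x -> pid w y -> pid w (x + y).
Proof. by case=> a -> [b ->]; exists (a + b); rewrite mulrDl. Qed.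
Lemma pidN (S : comPzRingType) (w x : S) : pid w x -> pid w (- x).
Proof. by case=> a ->; exists (- a); rewrite mulNr. Qed.
Lemma pidB (S : comPzRingType) (w x y : S) : pid w x -> pid w y -> pid w (x - y).
Proof. by move=> hx hy; apply: pidD => //; apply: pidN. Qed.
Lemma pidMl (S : comPzRingType) (w x y : S) : pid w x -> pid w (y * x).
Proof. by case=> a ->; exists (y * a); rewrite mulrA. Qed.
Lemma pidMr (S : comPzRingType) (w x y : S) : pid w x -> pid w (x * y).
Proof. by move=> h; rewrite mulrC; apply: pidMl. Qed.

Lemma torE (S : comPzRingType) (w x : S) :
  tor (pid w) x <-> exists n, w ^+ n * x = 0.
Proof.
split=> [h|[n hn] a [c ->]]; first by apply: h; apply: pidw.
by exists n; rewrite exprMn -mulrA hn mulr0.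
Qed.
Lemma tor_mulw (S : comPzRingType) (w x : S) : w * x = 0 -> tor (pid w) x.
Proof. by move=> h; apply/torE; exists 1%N; rewrite expr1. Qed.
Lemma tor0 (S : comPzRingType) (w : S) : tor (pid w) 0.
Proof. by apply: tor_mulw; rewrite mulr0. Qed.
Lemma tor_sub (S : comPzRingType) (w x y : S) :
  tor (pid w) x -> tor (pid w) y -> tor (pid w) (x - y).
Proof.
move=> /torE [n hn] /torE [m hm]; apply/torE; exists (n + m)%N.
rewrite exprD mulrBr.
have -> : w ^+ n * w ^+ m * x = w ^+ m * (w ^+ n * x) by ring.
by rewrite hn -mulrA hm !mulr0 subr0.
Qed.
Lemma tor_mull (S : comPzRingType) (w x y : S) : tor (pid w) x -> tor (pid w) (y * x).
Proof. by move=> /torE [n hn]; apply/torE; exists n; rewrite mulrCA hn mulr0. Qed.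
Lemma tor_exp (S : comPzRingType) (w x : S) n : tor (pid w) x -> tor (pid w) (x ^+ n.+1).
Proof. by move=> h; rewrite exprSr; apply: tor_mull. Qed.

Lemma T1_gen (S : comPzRingType) (w x : S) :
  (forall x, tor (pid w) x -> w * x = 0) -> tor (pid w) x -> pid w x -> x = 0.
Proof.
move=> g tx [c ec]; have tc : tor (pid w) c.
  move/torE: tx => [n hn]; apply/torE; exists n.+1.
  by rewrite exprSr -mulrA (mulrC w) -ec.
by rewrite ec mulrC g.
Qed.
Lemma T1'_gen (S : comPzRingType) (w x y : S) :
  (forall x, tor (pid w) x -> w * x = 0) -> tor (pid w) x -> tor (pid w) y ->
  pid w (x - y) -> x = y.
Proof.
move=> g tx ty h; apply/eqP; rewrite -subr_eq0; apply/eqP.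
exact: (T1_gen g (tor_sub tx ty) h).
Qed.

Lemma pW (R : nat -> comPzRingType) (t : forall i, {rmorphism R i -> R i.+1})
  (w0 : R 0) (p : nat) : pid w0 (p%:R) -> forall j, pid (tr t j w0) (p%:R : R j).
Proof.
move=> h; elim=> [|j [c ec]] //=.
by exists (t j c); rewrite -rmorphM -ec rmorph_nat.
Qed.

Lemma piW (R : nat -> comPzRingType) (t : forall i, {rmorphism R i -> R i.+1})
  (w0 : R 0) (w1 : R 1) (p : nat) :
  (forall x : R 1, pid (w1 ^+ p) x <-> I0R t w0 1 x) ->
  forall k, exists a b : R k.+1,
    tr t k.+1 w0 = a * (tr1 t k w1) ^+ p /\ (tr1 t k w1) ^+ p = b * tr t k.+1 w0.
Proof.
move=> h; elim=> [|k [a [b [ha hb]]]].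
  have [a ha] := (proj2 (h (tr t 1 w0))) (pidw _).
  have [b hb] := (proj1 (h (w1 ^+ p))) (pidw _).
  by exists a, b.
exists (t k.+1 a), (t k.+1 b); split.
  by rewrite /= -rmorphXn -rmorphM -ha.
by rewrite /= -rmorphXn -rmorphM -hb.
Qed.

Theorem theorem2p11 (p : nat) (R : nat -> comPzRingType)
  (t : forall i, {rmorphism R i -> R i.+1}) (w0 : R 0) (w1 : R 1) :
  prime p ->
  pi_tower p t w0 -> cond_d p t w0 -> cond_f p t w0 w1 ->
  (cond_g p t w0 <-> forall i : nat, square1 t w0 i /\ square2 p t w0 w1 i).
Proof.
move=> pp; have := prime_gt1 pp; case: p pp => [|[|q]] // pp _.
move=> [Hp Hb Hc] Hd [Hf1 Hf2].
have HpW := pW t Hp.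
have HpiW := piW Hf1.
have zp : forall j, (0 : R j) ^+ q.+2 = 0 by move=> j; rewrite exprS mul0r.
have T0 : forall j, tor (I0R t w0 j) (0 : R j) by move=> j; apply: tor0.
have B : forall i (x : R i), pid (tr t i.+1 w0) (t i x) -> pid (tr t i w0) x.
  by move=> i x h; have := Hb i x 0; rewrite /cong /I0R rmorph0 !subr0; apply.
have pid_t : forall i (x : R i), pid (tr t i w0) x -> pid (tr t i.+1 w0) (t i x).
  by move=> i x [c ->]; exists (t i c); rewrite rmorphM.
have tor_t : forall i (x : R i), tor (I0R t w0 i) x -> tor (I0R t w0 i.+1) (t i x).
  move=> i x /torE [n hn]; apply/torE; exists n.
  by rewrite /= -rmorphXn -rmorphM hn rmorph0.
have K : forall i (e : R i.+1), pid (tr t i.+1 w0) (e ^+ q.+2) -> pid (tr1 t i w1) e.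
  move=> i e he.
  have fr : Frel q.+2 t w0 i e 0.
    by rewrite /Frel /cong /I0R rmorph0 sub0r; apply: pidN.
  have [u [v ->]] := (proj1 (Hf2 i e)) (ex_intro _ 0 (conj fr (pid0 _))).
  have [a [b [ha hb]]] := HpiW i.
  apply: pidD; first by apply: pidMl; apply: pidw.
  by rewrite ha exprS; apply: pidMl; apply: pidMl; apply: pidMr; apply: pidw.
split.
- move=> Hg.
  have g1 : forall i (x : R i), tor (I0R t w0 i) x -> tr t i w0 * x = 0.
    move=> i x tx; have [h _] := Hg i; exact: h tx _ (pidw _).
  have T1' : forall i (x y : R i), tor (I0R t w0 i) x -> tor (I0R t w0 i) y ->
      pid (tr t i w0) (x - y) -> x = y.
    by move=> i x y; apply: T1'_gen; apply: g1.
  have pkill : forall i (d : R i), tor (I0R t w0 i) d -> q.+2%:R * d = 0.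
    by move=> i d td; have [c ->] := HpW i; rewrite -mulrA g1 // mulr0.
  have FrobInj : forall i (y : R i.+1), tor (I0R t w0 i.+1) y -> y ^+ q.+2 = 0 -> y = 0.
    move=> i y ty y0; have [_ [Ft [[G FG GF] HF]]] := Hg i.
    pose Y : {y : R i.+1 | tor (I0R t w0 i.+1) y} := exist _ y ty.
    have t0 : tor (I0R t w0 i.+1) (0 : R i.+1) by apply: tor0.
    pose Z : {y : R i.+1 | tor (I0R t w0 i.+1) y} := exist _ 0 t0.
    have e0 : forall Q : {y : R i.+1 | tor (I0R t w0 i.+1) y},
        sval Q ^+ q.+2 = 0 -> sval (Ft Q) = 0.
      move=> Q hQ; have := HF Q; rewrite /Frel /cong hQ subr0 => /B h.
      exact: (T1_gen (g1 i) (svalP (Ft Q)) h).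
    have : Ft Y = Ft Z by apply: sig_eq; rewrite !e0 //= zp.
    by move/(congr1 G); rewrite !FG => /(congr1 sval).
  have Finj : forall i (x y : R i.+1), tor (I0R t w0 i.+1) x -> tor (I0R t w0 i.+1) y ->
      x ^+ q.+2 = y ^+ q.+2 -> x = y.
    move=> i x y tx ty exy; have txy := tor_sub tx ty.
    have [z hz] := binom_p (x - y) y pp; rewrite subrK in hz.
    have h0 : q.+2%:R * ((x - y) * y * z) = 0.
      by rewrite -mulrA mulrA pkill // mul0r.
    rewrite h0 addr0 exy -{1}(add0r (y ^+ q.+2)) in hz.
    move/addIr: hz => /esym /(FrobInj i _ txy) /eqP.
    by rewrite subr_eq0 => /eqP.
  have piTor : forall k (d : R k.+1), tor (I0R t w0 k.+1) d -> tr1 t k w1 * d = 0.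
    move=> k d td; apply: (FrobInj k).
      by apply: tor_mulw; rewrite mulrCA g1 // mulr0.
    have [a [b [ha hb]]] := HpiW k.
    rewrite exprMn hb exprS.
    have -> : b * tr t k.+1 w0 * (d * d ^+ q.+1) = b * d ^+ q.+1 * (tr t k.+1 w0 * d) by ring.
    by rewrite g1 // mulr0.
  have Lift : forall i (c : R i), tor (I0R t w0 i) c ->
      exists d : R i.+1, tor (I0R t w0 i.+1) d /\ t i c = d ^+ q.+2.
    move=> i c tc; have [_ [Ft [[G FG GF] HF]]] := Hg i.
    pose C : {x : R i | tor (I0R t w0 i) x} := exist _ c tc.
    exists (sval (G C)); split; first exact: svalP.
    have := HF (G C); rewrite GF /= => h.
    apply: T1' => //; [exact: tor_t | exact: tor_exp (svalP (G C))].
  have S2ex : forall i (c b : R i.+1), tor (I0R t w0 i.+1) c ->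
      pid (tr t i.+1 w0) (c - b ^+ q.+2) ->
      exists a, [/\ tor (I0R t w0 i.+1) a, a ^+ q.+2 = c & pid (tr1 t i w1) (a - b)].
    move=> i c b tc hcb.
    have [d [td tcd]] := Lift i.+1 c tc.
    pose e := t i.+1 b - d.
    have [z hz] := binom_p e d pp.
    have pd : q.+2%:R * (e * d * z) = 0.
      by rewrite (mulrC e) -mulrA mulrA pkill // mul0r.
    rewrite pd addr0 /e subrK in hz.
    have ep : e ^+ q.+2 = t i.+1 (b ^+ q.+2 - c).
      by rewrite rmorphB rmorphXn tcd hz; ring.
    have : pid (tr t i.+2 w0) (e ^+ q.+2).
      by rewrite ep; apply: pid_t; rewrite -opprB; apply: pidN.
    move/K => [r er].
    have [a' [b' [ha' hb']]] := HpiW i.+1.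
    have h1 : pid (tr t i.+2 w0) (t i.+1 ((tr1 t i w1) ^+ q.+1 * b)).
      rewrite rmorphM rmorphXn.
      have -> : t i.+1 b = e + d by rewrite /e subrK.
      rewrite mulrDr.
      have -> : (t i.+1 (tr1 t i w1)) ^+ q.+1 * d =
                (t i.+1 (tr1 t i w1)) ^+ q * (tr1 t i.+1 w1 * d) by rewrite exprSr mulrA.
      rewrite piTor // mulr0 addr0 er.
      have -> : t i.+1 (tr1 t i w1) ^+ q.+1 * (r * tr1 t i.+1 w1) =
                r * (tr1 t i.+1 w1) ^+ q.+2.
        by change (t i.+1 (tr1 t i w1)) with (tr1 t i.+1 w1); rewrite [in RHS]exprSr; ring.
      by rewrite hb'; apply: pidMl; apply: pidMl; apply: pidw.
    have [k hk] := B _ _ h1.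
    have [a0 [b0 [ha0 hb0]]] := HpiW i.
    pose a := b - k * a0 * tr1 t i w1.
    have hann : (tr1 t i w1) ^+ q.+1 * a = 0.
      rewrite /a mulrBr hk ha0 exprSr; ring.
    have ta : tor (I0R t w0 i.+1) a.
      apply: tor_mulw; rewrite ha0 exprSr.
      have -> : a0 * ((tr1 t i w1) ^+ q.+1 * tr1 t i w1) * a =
                a0 * tr1 t i w1 * ((tr1 t i w1) ^+ q.+1 * a) by ring.
      by rewrite hann mulr0.
    exists a; split => //; last first.
      have -> : a - b = (- (k * a0)) * tr1 t i w1 by rewrite /a; ring.
      by apply: pidMl; apply: pidw.
    apply: T1' => //; first exact: tor_exp.
    have [z' hz'] := binom_p b (- (k * a0 * tr1 t i w1)) pp.
    rewrite /a hz'.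
    have -> : b ^+ q.+2 + (- (k * a0 * tr1 t i w1)) ^+ q.+2 +
        q.+2%:R * (b * - (k * a0 * tr1 t i w1) * z') - c =
        - (c - b ^+ q.+2) + (- (k * a0)) ^+ q.+2 * (tr1 t i w1) ^+ q.+2 +
        q.+2%:R * (b * - (k * a0 * tr1 t i w1) * z').
      by rewrite -exprMn mulNr; ring.
    apply: pidD; first apply: pidD.
    + exact: pidN.
    + by rewrite hb0; apply: pidMl; apply: pidMl; apply: pidw.
    + by apply: pidMr; apply: HpW.
  move=> i; split.
  + move=> c b /= tc hcb.
    have [y hy] := Hd i b.
    have hcy : pid (tr t i.+1 w0) (c - y ^+ q.+2).
      have -> : c - y ^+ q.+2 = (c - t i b) + (t i b - y ^+ q.+2) by ring.
      exact: pidD.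
    have [a' [ta' ea' _]] := S2ex i c y tc hcy.
    have [_ [Ft [[G FG GF] HF]]] := Hg i.
    pose A' : {x : R i.+1 | tor (I0R t w0 i.+1) x} := exist _ a' ta'.
    have eta : t i (sval (Ft A')) = c.
      apply: T1' => //; first exact: tor_t (svalP (Ft A')).
      by have := HF A'; rewrite /Frel /cong /= ea'.
    exists (sval (Ft A')); split.
      split => //; first exact: svalP.
      by apply: Hb; rewrite /cong eta.
    move=> a2 [ta2 _ ca2]; apply: T1' => //; first exact: svalP.
    have -> : sval (Ft A') - a2 = (sval (Ft A') - b) - (a2 - b) by ring.
    apply: pidB => //; apply: Hb; rewrite /cong eta; exact: hcb.
  + move=> c b /= tc hcb.
    have [a [ta ea ca]] := S2ex i c b tc hcb.
    exists a; split => //.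
    by move=> a2 [ta2 ea2 _]; apply: Finj => //; rewrite ea ea2.
- move=> Hsq.
  have tw2 : forall i (y : R i), tr t i w0 ^+ 2 * y = 0 -> tr t i w0 * y = 0.
    move=> i y hy.
    have tz : tor (I0R t w0 i) (tr t i w0 * y).
      by apply: tor_mulw; rewrite mulrA -expr2.
    have hZ : t i (tr t i w0 * y) = 0.
      have [_ S2] := Hsq i.
      have := S2 0 0 (T0 _); rewrite /cong zp subr0 => /(_ (pid0 _)).
      case=> a [_ ua].
      have e1 := ua 0 (And3 (T0 _) (zp _) (eq_ind_r _ (pid0 _) (subr0 0))).
      have [a1 [b1 [ha1 hb1]]] := HpiW i.
      have e2 : a = t i (tr t i w0 * y).
        apply: ua; split.
        * exact: tor_t.
        * rewrite -rmorphXn exprS exprS.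
          have -> : tr t i w0 * y * (tr t i w0 * y * (tr t i w0 * y) ^+ q) =
                    (tr t i w0 ^+ 2 * y) * (y * (tr t i w0 * y) ^+ q) by ring.
          by rewrite hy mul0r rmorph0.
        * rewrite /= subr0 rmorphM /I1R.
          change (t i (tr t i w0)) with (tr t i.+1 w0); rewrite ha1 exprS.
          by apply: pidMr; apply: pidMl; apply: pidMr; apply: pidw.
      by rewrite -e2 e1.
    have [S1 _] := Hsq i.
    have := S1 0 0 (T0 _); rewrite /cong /= rmorph0 subr0 => /(_ (pid0 _)).
    case=> a [_ ua].
    have e1 := ua 0 (And3 (T0 _) (rmorph0 _) (eq_ind_r _ (pid0 _) (subr0 0))).
    have e2 : a = tr t i w0 * y.
      apply: ua; split => //.
      by rewrite /= subr0 mulrC; apply: pidMl; apply: pidw.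
    by rewrite -e2 e1.
  have g1 : forall i (x : R i), tor (I0R t w0 i) x -> tr t i w0 * x = 0.
    move=> i x /torE [n]; elim: n x => [|n IH] x hn.
      by move: hn; rewrite expr0 mul1r => ->; rewrite mulr0.
    apply: tw2; rewrite expr2 -mulrA; apply: IH.
    by rewrite mulrA -exprSr.
  have T1' : forall i (x y : R i), tor (I0R t w0 i) x -> tor (I0R t w0 i) y ->
      pid (tr t i w0) (x - y) -> x = y.
    by move=> i x y; apply: T1'_gen; apply: g1.
  move=> i; split.
    by move=> x tx a [c ->]; rewrite -mulrA g1 // mulr0.
  have Fex : forall y : R i.+1, tor (I0R t w0 i.+1) y ->
      exists a : R i, tor (I0R t w0 i) a /\ t i a = y ^+ q.+2.
    move=> y ty; have [x hx] := Hc i y; have [S1 _] := Hsq i.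
    have hx' : pid (tr t i.+1 w0) (y ^+ q.+2 - t i x).
      by rewrite -opprB; apply: pidN.
    have [a [[ta ea _] _]] := S1 (y ^+ q.+2) x (tor_exp _ ty) hx'.
    by exists a.
  pose Ft := fun Y : {y : R i.+1 | tor (I0R t w0 i.+1) y} =>
    let s := constructive_indefinite_description _ (Fex _ (svalP Y)) in
    exist (fun a => tor (I0R t w0 i) a) (sval s) (proj1 (svalP s)).
  have HFt : forall Y, t i (sval (Ft Y)) = sval Y ^+ q.+2.
    by move=> Y; rewrite /Ft /=; case: (constructive_indefinite_description _ _) => a [].
  exists Ft; split; last first.
    by move=> Y; rewrite /Frel /cong HFt subrr; apply: pid0.
  apply: inj_surj_bij.
    move=> Y1 Y2 e.
    have ep : sval Y1 ^+ q.+2 = sval Y2 ^+ q.+2 by rewrite -!HFt e.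
    apply: sig_eq; have [_ S2] := Hsq i.
    have := S2 (sval Y1 ^+ q.+2) (sval Y1) (tor_exp _ (svalP Y1)).
    rewrite /cong subrr => /(_ (pid0 _)) [a [_ ua]].
    have e1 : a = sval Y1.
      by apply: ua; split => //; [exact: svalP | rewrite /= subrr; apply: pid0].
    have e2 : a = sval Y2.
      apply: ua; split => //; first exact: svalP.
      apply: K; have [z hz] := binom_p (sval Y2 - sval Y1) (sval Y1) pp.
      rewrite subrK in hz.
      have -> : (sval Y2 - sval Y1) ^+ q.+2 =
          - (q.+2%:R * ((sval Y2 - sval Y1) * sval Y1 * z)) +
          (sval Y2 ^+ q.+2 - sval Y1 ^+ q.+2) by rewrite hz; ring.
      rewrite ep subrr addr0.
      by apply: pidN; apply: pidMr; apply: HpW.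
    by rewrite -e1 -e2.
  move=> A; have [y0 hy0] := Hd i (sval A); have [_ S2] := Hsq i.
  have [y [[ty ey _] _]] := S2 (t i (sval A)) y0 (tor_t _ _ (svalP A)) hy0.
  exists (exist _ y ty); apply: sig_eq.
  apply: T1'; [exact: svalP | exact: svalP |].
  by apply: Hb; rewrite /cong HFt /= ey subrr; apply: pid0.
Qed.
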